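(* Consider the eigencurve learning-rate sequence $\{\eta_t\}$ described in the context, and let $\lambda_j$ be an eigenvalue of $H$. For integers $t\ge0$ define $$v_{t+1,j}=\sum_{k=0}^t\eta_k^2\prod_{i=k+1}^t(1-\eta_i\lambda_j)^2 .$$ Then for all integers $1\le t\le t'$ (within the range where the schedule is defined), $$v_{t',j}\le\max\left(v_{t,j},\,\eta_t/\lambda_j\right).$$
   Context: Let $H\in\mathbb{R}^{d\times d}$ be symmetric positive definite, with $\mu=\lambda_{\min}(H)$, $L=\lambda_{\max}(H)$ and $\kappa=L/\mu$. Let $I_{\max}=\log_2\kappa$, treated as an integer. Fix integers $0=t_0<\dots<t_{I_{\max}}=T$ with $\Delta_i=t_i-t_{i-1}$. The eigencurve learning rate is $$\eta_t=\frac{1}{L+\mu\sum_{j=1}^{i-1}\Delta_j2^{j-1}+2^{i-1}\mu(t-t_{i-1})}\quad\text{for }t\in[t_{i-1},t_i).$$ In particular $\eta_t\le1/L$ and $\eta_t$ is nonincreasing in $t$. *)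

(* Defs.v *)
From HB Require Import structures.
From mathcomp Require Import all_boot all_order all_algebra.
Set Implicit Arguments. Unset Strict Implicit. Unset Printing Implicit Defensive.
Import Order.TTheory GRing.Theory Num.Theory.
Local Open Scope ring_scope.

Definition eigencurve_phase (R : realFieldType) (mu L : R) (tb : nat -> nat)
  (i t : nat) : R :=
  1 / (L + mu * (\sum_(1 <= j < i) ((tb j - tb j.-1)%N%:R * 2 ^+ j.-1))
         + 2 ^+ i.-1 * mu * (t - tb i.-1)%N%:R).

(* v_n = sum_{k=0}^{n-1} eta_k^2 prod_{i=k+1}^{n-1} (1 - eta_i lam)^2,
   i.e. v_{t+1} = sum_{k=0}^{t} eta_k^2 prod_{i=k+1}^{t} (1 - eta_i lam)^2. *)
Definition vseq (R : realFieldType) (eta : nat -> R) (lam : R) (n : nat) : R :=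
  \sum_(k < n) eta k ^+ 2 * \prod_(k.+1 <= i < n) (1 - eta i * lam) ^+ 2.

(* Main.v *)
Require Import Defs.
From HB Require Import structures.
From mathcomp Require Import all_boot all_order all_algebra.
From mathcomp Require Import lra.
Import Order.TTheory GRing.Theory Num.Theory.
Local Open Scope ring_scope.



Lemma key_step (R : realFieldType) (e l v : R) :
  0 <= e -> 0 < l -> e * l <= 1 ->
  (1 - e * l) ^+ 2 * v + e ^+ 2 <= Num.max v (e / l).
Proof.
move=> e0 l0 el1.
set m := Num.max v (e / l).
have hv : v <= m by rewrite le_max lexx.
have he : e / l <= m by rewrite le_max lexx orbT.
have hlm : e <= l * m.
  by rewrite -ler_pdivrMl // mulrC.
have h1 : (1 - e * l) ^+ 2 * v <= (1 - e * l) ^+ 2 * m.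
  by apply: ler_wpM2l => //; exact: sqr_ge0.
have h2 : e * e <= e * (2 - e * l) * (l * m).
  have : e * e <= e * (l * m) by apply: ler_wpM2l.
  have : 0 <= e * (1 - e * l) * (l * m).
    apply: mulr_ge0; [apply: mulr_ge0 => //; lra | nra].
  nra.
rewrite !expr2 in h1 *.
nra.
Qed.

Lemma vseqS (R : realFieldType) (eta : nat -> R) (lam : R) n :
  vseq eta lam n.+1 = (1 - eta n * lam) ^+ 2 * vseq eta lam n + eta n ^+ 2.
Proof.
rewrite /vseq big_ord_recr /= big_geq ?leqnn // mulr1; congr (_ + _).
rewrite mulr_sumr; apply: eq_bigr => k _.
rewrite big_nat_recr /=; last exact: ltn_ord.
by rewrite mulrA mulrC.
Qed.

Lemma eig_pos (R : realFieldType) (d : nat) (H : 'M[R]_d) a :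
  (forall x : 'rV[R]_d, x != 0 -> 0 < (x *m H *m x^T) 0 0) ->
  eigenvalue H a -> 0 < a.
Proof.
move=> PD /eigenvalueP [v Hv v0].
have := PD v v0; rewrite Hv -scalemxAl mxE.
have : 0 <= (v *m v^T) 0 0.
  rewrite mxE; apply: sumr_ge0 => j _; rewrite mxE; rewrite -expr2; exact: sqr_ge0.
move=> s0 h; rewrite ltNge; apply/negP => a0.
have : a * (v *m v^T) 0 0 <= 0 by apply: mulr_le0_ge0.
by rewrite leNgt h.
Qed.

Theorem lemma10 (R : realFieldType) (d : nat) (H : 'M[R]_d)
  (mu L : R) (Imax : nat) (tb : nat -> nat) (T : nat) (eta : nat -> R)
  (lam : R) (t t' : nat) :
  H^T = H ->
  (forall x : 'rV[R]_d, x != 0 -> 0 < (x *m H *m x^T) 0 0) ->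
  eigenvalue H mu -> eigenvalue H L ->
  (forall a, eigenvalue H a -> mu <= a <= L) ->
  L / mu = 2 ^+ Imax ->
  tb 0 = 0%N ->
  (forall i, (i < Imax)%N -> (tb i < tb i.+1)%N) ->
  tb Imax = T ->
  (forall i s, (1 <= i <= Imax)%N -> (tb i.-1 <= s < tb i)%N ->
     eta s = eigencurve_phase mu L tb i s) ->
  eigenvalue H lam ->
  (1 <= t)%N -> (t <= t')%N -> (t' <= T)%N ->
  vseq eta lam t' <= Num.max (vseq eta lam t) (eta t / lam).
Proof.
move=> _ PD emu eL hab _ tb0 tbinc tbI heta elam t1 tt' t'T.
have mu0 := @eig_pos _ _ _ _ PD emu.
have lam0 := @eig_pos _ _ _ _ PD elam.
have /andP[_ lamL] := hab _ elam.
have /andP[muL _] := hab _ eL.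
have L0 : 0 < L by apply: lt_le_trans muL.
have phase : forall s, (s < T)%N ->
    exists2 i, (1 <= i <= Imax)%N & (tb i.-1 <= s < tb i)%N.
  move=> s; rewrite -tbI.
  suff : forall k, (k <= Imax)%N -> (s < tb k)%N ->
      exists2 i, (1 <= i <= k)%N & (tb i.-1 <= s < tb i)%N.
    by move=> /(_ Imax (leqnn _)) h /h [i hi hs]; exists i.
  elim=> [|k IH] hk; first by rewrite tb0.
  move=> hs; case: (ltnP s (tb k)) => hsk.
    have [i /andP[i1 ik] his] := IH (ltnW hk) hsk.
    by exists i => //; rewrite i1 /= (leq_trans ik).
  by exists k.+1 => //=; rewrite hsk hs.
set D := fun i s => L + mu * (\sum_(1 <= j < i) ((tb j - tb j.-1)%N%:R * 2 ^+ j.-1))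
         + 2 ^+ i.-1 * mu * (s - tb i.-1)%N%:R : R.
have etaD : forall i s, (1 <= i <= Imax)%N -> (tb i.-1 <= s < tb i)%N ->
    eta s = 1 / D i s by move=> i s hi hs; rewrite (heta i s hi hs).
have DL : forall i s, L <= D i s.
  move=> i s; rewrite /D -addrA lerDl; apply: addr_ge0.
    apply: mulr_ge0; first exact: ltW.
    apply: sumr_ge0 => j _; apply: mulr_ge0; first exact: ler0n.
    exact: exprn_ge0.
  apply: mulr_ge0; last exact: ler0n.
  by apply: mulr_ge0; [exact: exprn_ge0 | exact: ltW].
have inv_le : forall a b : R, 0 < a -> a <= b -> 1 / b <= 1 / a.
  move=> a b a0 ab; rewrite !div1r lef_pV2 // posrE //; exact: lt_le_trans ab.
have eta0 : forall s, (s < T)%N -> 0 <= eta s /\ eta s * lam <= 1.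
  move=> s /phase [i hi hs]; rewrite (etaD _ _ hi hs).
  have D0 : 0 < D i s by apply: lt_le_trans (DL i s).
  split; first by rewrite div1r invr_ge0 ltW.
  rewrite div1r mulrC -/(lam / D i s) ler_pdivrMr // mul1r.
  exact: le_trans lamL (DL i s).
have etamono : forall s, (s.+1 < T)%N -> eta s.+1 <= eta s.
  move=> s hsT; have [i hi hs] := phase s (ltnW hsT).
  rewrite (etaD _ _ hi hs).
  have D0 : 0 < D i s by apply: lt_le_trans (DL i s).
  move: hs => /andP[hs1 hs2].
  case: (ltnP s.+1 (tb i)) => hsi.
    rewrite (etaD i s.+1 hi); last by rewrite hsi (leq_trans hs1).
    apply: inv_le => //; rewrite /D subSn // -[(s - _).+1]addn1 natrD.
    have : 0 <= 2 ^+ i.-1 * mu by apply: mulr_ge0; [exact: exprn_ge0|exact: ltW].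
    nra.
  have esi : s.+1 = tb i by apply/eqP; rewrite eqn_leq hsi hs2.
  move: hi => /andP[i1 iI].
  have iI' : (i < Imax)%N.
    rewrite ltn_neqAle iI andbT; apply/eqP => ei.
    by move: hsT; rewrite esi ei tbI ltnn.
  rewrite (etaD i.+1 s.+1); last 2 first.
  - by rewrite /= iI'.
  - by rewrite /= esi leqnn tbinc.
  apply: inv_le => //; rewrite /D /= big_nat_recr //= esi subnn mulr0 addr0.
  have hx : ((s - tb i.-1)%N%:R <= (tb i - tb i.-1)%N%:R :> R).
    by rewrite ler_nat leq_sub2r // ltnW.
  have : 0 <= 2 ^+ i.-1 * mu by apply: mulr_ge0; [exact: exprn_ge0|exact: ltW].
  nra.
have etadec : forall n, (t <= n)%N -> (n < T)%N -> eta n <= eta t.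
  elim=> [|n IH] htn hnT; first by move: htn; rewrite leqn0 => /eqP ht; rewrite ht in t1.
  case: (ltngtP t n.+1) htn => // [htn' _ | <- _]; last exact: lexx.
  exact: le_trans (etamono n hnT) (IH htn' (ltnW hnT)).
set M := Num.max (vseq eta lam t) (eta t / lam).
suff : forall n, (t <= n <= t')%N -> vseq eta lam n <= M.
  by apply; rewrite tt' leqnn.
elim=> [|n IH] /andP[htn hnt'].
  by move: htn; rewrite leqn0 => /eqP ht; rewrite ht in t1.
case: (ltngtP t n.+1) htn => // [htn' _ | <- _]; last by rewrite le_max lexx.
have hnT : (n < T)%N by apply: leq_trans t'T.
have [e0 el] := eta0 n hnT.
rewrite vseqS; apply: le_trans (@key_step _ _ _ _ e0 lam0 el) _.
rewrite ge_max; apply/andP; split.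
  by apply: IH; rewrite -ltnS htn' ltnW.
rewrite le_max; apply/orP; right.
by rewrite ler_pM2r ?invr_gt0 // etadec.
Qed.
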